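(* Let $\mathfrak S$ be a controlled Markov process, $\mathcal G$ its induced abstract $2\frac12$-player game graph, $U\subseteq V_0$, $\pi_0$ a deterministic memoryless strategy of Player 0, and $r:V_0\to\mathbb N\cup\{\infty\}$ the ranking function for $\lozenge U$ under $\pi_0$ (as defined in the context). For every $v\in V_0$ with $r(v)=i\ne\infty$ and $i>0$, writing $\pi_0(v)=(v,u)$, we have $\overline F(v,u)\cap r^{-1}(\infty)=\emptyset$, and moreover at least one of the following holds: (1) $\underline F(v,u)\cap r^{-1}(i-1)\ne\emptyset$; or (2) $\underline F(v,u)=\emptyset$ and $\overline F(v,u)\subseteq r^{-1}(i-1)$.
   Context: CMP: $\mathfrak S=(\mathcal S,\mathcal U,T_{\mathfrak s})$ with $\mathcal S$ a Borel space, $\mathcal U$ finite, $T_{\mathfrak s}(\cdot\mid s,u)$ a probability measure on the Borel sets of $\mathcal S$. $\mathcal P=\langle B_1,\dots,B_\ell\rangle$ is a given measurable partition of $\mathcal S$. Abstraction: $\widehat{\mathcal S}$ is a finite partition of $\mathcal S$ into nonempty cells each contained in a single $B_i$. Functions $\overline F,\underline F:\widehat{\mathcal S}\times\mathcal U\to2^{\widehat{\mathcal S}}$ satisfy $\overline F(\widehat s,u)\supseteq\{\widehat s'\mid\exists s\in\widehat s.\ T_{\mathfrak s}(\widehat s'\mid s,u)>0\}$ and $\underline F(\widehat s,u)\subseteq\{\widehat s'\mid\exists\varepsilon>0\ \forall s\in\widehat s.\ T_{\mathfrak s}(\widehat s'\mid s,u)\ge\varepsilon\}$. Game graph $\mathcal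 G=\langle V,E,\langle V_0,V_1,V_r\rangle\rangle$: $V_0=\widehat{\mathcal S}$, $V_1=\widehat{\mathcal S}\times\mathcal U$, $V_r=\bigcup_{v_1\in V_1}V_r(v_1)$ with $V_r(v_1)=\{v_r\subseteq\widehat{\mathcal S}\mid\underline F(v_1)\subseteq v_r\subseteq\overline F(v_1),\ 1\le|v_r|\le|\underline F(v_1)|+1\}$; $E(v_0)=\{(v_0,u)\mid u\in\mathcal U\}$, $E(v_1)=V_r(v_1)$, $E(v_r)=\{v_0\in V_0\mid v_0\in v_r\}$. Player 0 moves at $V_0$, Player 1 at $V_1$, random uniform successor at $V_r$. Strategies $\pi_i:V^*V_i\to\mathit{Dist}(V)$ are supported on successors; a deterministic memoryless Player 0 strategy assigns each $v_0$ a single successor $\pi_0(v_0)=(v_0,u)$. $P_v^{\pi_0,\pi_1}$ is the induced measure on runs. Formulas over $V_0$ are evaluated on the projection of a run to its $V_0$-vertices: $\lozenge A$ means some projected vertex lies in $A$, and $\bigcirc A$ means the second vertex of the projected run (the next $V_0$-vertex) lies in $A$. Ranking function: $r:V_0\to\mathbb N\cup\{\infty\}$ is defined inductively by $r(v)=0$ if $v\in U$; $r(v)=\infty$ if $\inf_{\pi_1}P_v^{\pi_0,\pi_1}(\mathcal G\models\lozenge U)<1$; and $r(v)=i+1$ if $\min\{n\in\mathbb N\mid\inf_{\pi_1}P_v^{\pi_0,\pi_1}(\mathcal G\models\bigcirc r^{-1}(n))>0\}=i$ and $\inf_{\pi_1}P_v^{\pi_0,\pi_1}(\mathcal G\not\models\bigcirc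 r^{-1}(\infty))=1$, infima over all Player 1 strategies. *)

(* Defs.v *)
From HB Require Import structures.
From mathcomp Require Import all_boot all_order all_algebra.
From mathcomp Require Import all_classical all_reals all_analysis.
Set Implicit Arguments. Unset Strict Implicit. Unset Printing Implicit Defensive.
Import Order.TTheory GRing.Theory Num.Theory.
Local Open Scope classical_set_scope.
Local Open Scope ring_scope.

(* Vertices of the abstract 2 1/2-player game graph:
   V0 = abstract states (cells), V1 = cells x actions, Vr = sets of cells. *)
Inductive vertex (Cell Act : finType) : Type :=
| V0v of Cell
| V1v of Cell * Act
| Vrv of {set Cell}.
Arguments V0v {Cell Act}.
Arguments V1v {Cell Act}.
Arguments Vrv {Cell Act}.

Section Game.
Variables (R : realType) (Cell Act : finType).
Variables (Fbar Funder : Cell -> Act -> {set Cell}).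
Variables (U : {set Cell}) (pi0 : Cell -> Act).

Definition Vr (c : Cell) (a : Act) : {set {set Cell}} :=
  [set vr : {set Cell} | [&& Funder c a \subset vr, vr \subset Fbar c a,
                            (0 < #|vr|)%N & (#|vr| <= #|Funder c a|.+1)%N]].

(* A (history-dependent, randomized) Player 1 strategy: given a history
   in V^* V_1 it gives a distribution over successors (which are V_r vertices,
   i.e. sets of cells). *)
Definition strategy1 := seq (vertex Cell Act) -> {set Cell} -> R.

Definition valid1 (pi1 : strategy1) : Prop :=
  forall (h : seq (vertex Cell Act)) (c : Cell) (a : Act),
    [/\ (forall vr, 0 <= pi1 (rcons h (V1v (c, a))) vr),
        \sum_(vr : {set Cell}) pi1 (rcons h (V1v (c, a))) vr = 1 &
        (forall vr, vr \notin Vr c a -> pi1 (rcons h (V1v (c, a))) vr = 0)].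

(* Probability (under pi0, pi1, uniform random vertices) that the projected
   run started after history h at V0-vertex v visits U within n rounds. *)
Fixpoint reachN (pi1 : strategy1) (n : nat) (h : seq (vertex Cell Act))
  (v : Cell) : R :=
  if v \in U then 1 else
  match n with
  | 0 => 0
  | n'.+1 =>
    let h1 := rcons (rcons h (V0v v)) (V1v (v, pi0 v)) in
    \sum_(vr : {set Cell})
       pi1 h1 vr * (#|vr|%:R)^-1 *
       \sum_(w in vr) reachN pi1 n' (rcons h1 (Vrv vr)) w
  end.

(* P_v^{pi0,pi1}(G |= <> U) : the measure of the countable union of the
   increasing events "U reached within n rounds". *)
Definition Preach (pi1 : strategy1) (v : Cell) : R :=
  sup [set reachN pi1 n [::] v | n in [set: nat]].

(* P_v^{pi0,pi1}(G |= O A) : next V0-vertex of the run lies in A. *)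
Definition Pnext (pi1 : strategy1) (A : {set Cell}) (v : Cell) : R :=
  \sum_(vr : {set Cell})
     pi1 [:: V0v v; V1v (v, pi0 v)] vr * (#|vr|%:R)^-1 * #|vr :&: A|%:R.

Definition inf1 (f : strategy1 -> R) : R :=
  inf [set f p | p in [set p | valid1 p]].

(* r^{-1}(n), with None standing for infinity *)
Definition rinv (r : Cell -> option nat) (n : option nat) : {set Cell} :=
  [set c | r c == n].

Definition is_ranking (r : Cell -> option nat) : Prop :=
  forall v : Cell,
  [/\ r v = Some 0%N <-> v \in U,
      r v = None <-> (v \notin U /\ inf1 (fun p => Preach p v) < 1) &
      forall i : nat, r v = Some i.+1 <->
        [/\ v \notin U, ~ (inf1 (fun p => Preach p v) < 1),
            0 < inf1 (fun p => Pnext p (rinv r (Some i)) v),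
            (forall n : nat, (n < i)%N ->
                ~ (0 < inf1 (fun p => Pnext p (rinv r (Some n)) v))) &
            inf1 (fun p => 1 - Pnext p (rinv r None) v) = 1]].

End Game.

(* Main.v *)
Require Import Defs.
From HB Require Import structures.
From mathcomp Require Import all_boot all_order all_algebra.
From mathcomp Require Import all_classical all_reals all_analysis.
Import Order.TTheory GRing.Theory Num.Theory.
Local Open Scope classical_set_scope.
Local Open Scope ring_scope.

Section H.
Variables (R : realType) (Cell Act : finType).
Variables (Fbar Funder : Cell -> Act -> {set Cell}).
Variables (U : {set Cell}) (pi0 : Cell -> Act).

Lemma valid_ex (f : strategy1 R Cell Act -> R) :
  @Defs.inf1 R Cell Act Fbar Funder f = 1 -> exists p, @valid1 R Cell Act Fbar Funder p.
Proof.
move=> h; apply: contrapT => hn.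
have : [set f p | p in [set p | @valid1 R Cell Act Fbar Funder p]] = set0.
  apply/seteqP; split => // x [p hp _]; apply: hn; by exists p.
move=> E; move: h; rewrite /Defs.inf1 E inf0 => /eqP; rewrite eq_sym oner_eq0.
by [].
Qed.

Lemma Pnext_bounds p A v : @valid1 R Cell Act Fbar Funder p ->
  0 <= Pnext pi0 p A v <= 1.
Proof.
move=> /(_ [:: V0v v] v (pi0 v)) [h0 h1 _].
rewrite /Pnext; apply/andP; split.
  apply: sumr_ge0 => vr _; rewrite !mulr_ge0 //.
rewrite -[X in _ <= X]h1 /=; apply: ler_sum => vr _.
rewrite -mulrA; apply: ler_piMr => //.
have [->|hne] := eqVneq #|vr| 0%N; first by rewrite invr0 mul0r.
rewrite ler_pdivrMl ?ltr0n ?lt0n // mulr1 ler_nat.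
by apply: subset_leq_card; apply: subsetIl.
Qed.

Lemma inf1_le (f : strategy1 R Cell Act -> R) p :
  (forall q, @valid1 R Cell Act Fbar Funder q -> 0 <= f q) ->
  @valid1 R Cell Act Fbar Funder p -> @Defs.inf1 R Cell Act Fbar Funder f <= f p.
Proof.
move=> hb hp; apply: ge_inf; last by exists p.
exists 0 => x [q hq <-]; exact: hb.
Qed.

Definition isroot (v : Cell) (h : seq (vertex Cell Act)) : bool :=
  match h with
  | [:: V0v x; V1v (y, b)] => [&& x == v, y == v & b == pi0 v]
  | _ => false
  end.

Lemma modify p0 v target : @valid1 R Cell Act Fbar Funder p0 ->
  target \in Vr Fbar Funder v (pi0 v) ->
  exists p, @valid1 R Cell Act Fbar Funder p /\
   forall A, Pnext pi0 p A v = (#|target|%:R)^-1 * #|target :&: A|%:R.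
Proof.
move=> hp0 ht.
exists (fun (h : seq (vertex Cell Act)) (vr : {set Cell}) => if isroot v h then
                     (if vr == target then 1 else 0 : R) else p0 h vr).
split.
  move=> h c a; case E: (isroot v (rcons h (V1v (c, a)))).
    have [eh [ec ea]] : h = [:: V0v v] /\ (c = v /\ a = pi0 v).
      move: E; case: h => [|x [|y t]] //=.
        by case: x => // x /and3P [/eqP -> /eqP -> /eqP ->].
      by case: x => // ?; case: y => // -[? ?]; case: t.
    subst; split.
    - by move=> vr; case: ifP.
    - by rewrite (bigD1 target) //= eqxx big1 ?addr0 // => vr /negbTE ->.
    - by move=> vr hvr; case: eqP => // e; move: hvr; rewrite e ht.
  by apply: hp0.
move=> A; rewrite /Pnext /= !eqxx /= (bigD1 target) //= eqxx mul1r big1 ?addr0 //.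
by move=> vr /negbTE ->; rewrite !mul0r.
Qed.

End H.
Theorem lemma4
  (d : measure_display) (S : measurableType d) (R : realType) (Act : finType)
  (T : S -> Act -> probability S R)
  (B : finType) (block : S -> B)
  (hB : forall b : B, measurable (block @^-1` [set b]))
  (Cell : finType) (cell : S -> Cell)
  (hcell_meas : forall c : Cell, measurable (cell @^-1` [set c]))
  (hcell_ne : forall c : Cell, exists s : S, cell s = c)
  (hcell_block : forall s s' : S, cell s = cell s' -> block s = block s')
  (Fbar Funder : Cell -> Act -> {set Cell})
  (hFbar : forall (c : Cell) (a : Act) (c' : Cell),
     (exists s : S, cell s = c /\ (0 < T s a (cell @^-1` [set c']))%E) ->
     c' \in Fbar c a)
  (hFunder : forall (c : Cell) (a : Act) (c' : Cell), c' \in Funder c a ->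
     exists eps : R, 0 < eps /\
       forall s : S, cell s = c -> (eps%:E <= T s a (cell @^-1` [set c']))%E)
  (U : {set Cell}) (pi0 : Cell -> Act) (r : Cell -> option nat)
  (hr : is_ranking R Fbar Funder U pi0 r)
  (v : Cell) (i : nat) :
  r v = Some i -> (0 < i)%N ->
  Fbar v (pi0 v) :&: rinv r None = finset.set0 /\
  (Funder v (pi0 v) :&: rinv r (Some i.-1) != finset.set0 \/
   (Funder v (pi0 v) = finset.set0 /\ Fbar v (pi0 v) \subset rinv r (Some i.-1))).
Proof.
move=> hv hi.
case: i hi hv => [//|j] _ hv /=.
have [_ _ H3] := hr v.
have [hvU _ hpos _ hinf] := (H3 j).1 hv.
have [p0 hp0] := @valid_ex R Cell Act Fbar Funder _ hinf.
have sub : Funder v (pi0 v) \subset Fbar v (pi0 v).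
  apply/fintype.subsetP => c' hc'; apply: hFbar.
  have [eps [he hs]] := hFunder _ _ _ hc'.
  have [s hs'] := hcell_ne v.
  exists s; split => //; apply: lt_le_trans (hs s hs'); by rewrite lte_fin.
have key : forall target A, target \in Vr Fbar Funder v (pi0 v) ->
   exists p, @valid1 R Cell Act Fbar Funder p /\
     Pnext pi0 p A v = (#|target|%:R)^-1 * #|target :&: A|%:R.
  move=> target A ht; have [p [hp hP]] := @modify R Cell Act Fbar Funder pi0 _ _ _ hp0 ht.
  by exists p; split.
split.
  apply/eqP; rewrite -finset.subset0; apply/fintype.subsetP => c /setIP [cF cinf].
  have ht : c |: Funder v (pi0 v) \in Vr Fbar Funder v (pi0 v).
    rewrite inE finset.subsetUr finset.subUset finset.sub1set cF sub /=.
    apply/andP; split; first by apply/card_gt0P; exists c; rewrite setU11.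
    by rewrite cardsU1; case: (c \in _).
  have [p [hp hP]] := key _ (rinv r None) ht.
  have lb1 : forall q, @valid1 R Cell Act Fbar Funder q -> 0 <= 1 - Pnext pi0 q (rinv r None) v.
    by move=> q hq; have /andP[_ h1] := @Pnext_bounds R Cell Act Fbar Funder pi0 _ (rinv r None) v hq; rewrite subr_ge0.
  have := @inf1_le R Cell Act Fbar Funder (fun p => 1 - Pnext pi0 p (rinv r None) v) p lb1 hp.
  rewrite hinf hP.
  rewrite -subr_ge0 addrAC subrr add0r oppr_ge0 => h.
  have : 0 < (#|c |: Funder v (pi0 v)|%:R)^-1 * #|(c |: Funder v (pi0 v)) :&: rinv r None|%:R :> R.
    rewrite mulr_gt0 // ?invr_gt0 ltr0n card_gt0; apply/set0Pn; exists c.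
      by rewrite setU11.
    by rewrite inE setU11.
  by rewrite ltNge h.
have lb : forall A q, @valid1 R Cell Act Fbar Funder q -> 0 <= Pnext pi0 q A v.
  by move=> A q hq; have /andP[] := @Pnext_bounds R Cell Act Fbar Funder pi0 _ A v hq.
have zero : forall target, target \in Vr Fbar Funder v (pi0 v) ->
   target :&: rinv r (Some j) = finset.set0 -> False.
  move=> target ht h0.
  have [p [hp hP]] := key _ (rinv r (Some j)) ht.
  have := @inf1_le R Cell Act Fbar Funder (fun p => Pnext pi0 p (rinv r (Some j)) v) p
    (lb _) hp.
  by rewrite hP h0 cards0 mulr0 leNgt hpos.
case: (boolP (Funder v (pi0 v) :&: rinv r (Some j) == finset.set0)) => h; last by left.
right.
have F0 : Funder v (pi0 v) = finset.set0.
  apply/eqP; apply: contraT => hne; exfalso; apply: (zero (Funder v (pi0 v))); last exact/eqP.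
  by rewrite inE subxx sub card_gt0 hne leqnSn.
split => //; apply/fintype.subsetP => c cF; apply: contraT => hc; exfalso.
apply: (zero (finset.set1 c)).
  by rewrite inE F0 finset.sub0set finset.sub1set cF cards1.
apply/setP => x; rewrite !inE; case: eqP => // ->; move: hc; rewrite inE /=; exact: negbTE.
Qed.
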